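(* Let $G_1,G_2$ be regular (finite, simple, undirected) graphs and let $G$ be a graph (without loops, unweighted, possibly directed) with $2$ vertices. Then \[ E(G[G_1,G_2])\ge E(G)+E(G_1)+E(G_2). \]
   Context: The energy $E(H)$ of a (di)graph $H$ is the sum of the absolute values of the eigenvalues (with multiplicity) of its adjacency matrix. For a graph $G$ on vertices $v_1,v_2$ with adjacency matrix $(a_{ij})$, the joined union $G[G_1,G_2]$ has adjacency matrix $\begin{pmatrix} A_1 & a_{12}\mathbf 1\\ a_{21}\mathbf 1 & A_2\end{pmatrix}$, where $A_i$ is the adjacency matrix of $G_i$ and $a_{ij}\mathbf 1$ is the all-$a_{ij}$ matrix of appropriate size; i.e. every vertex of $G_i$ is joined to every vertex of $G_j$ whenever $v_i$ is adjacent to $v_j$ in $G$. *)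

(* Defs.v *)
From HB Require Import structures.
From mathcomp Require Import all_boot all_order all_algebra all_field.
Set Implicit Arguments. Unset Strict Implicit. Unset Printing Implicit Defensive.
Import Order.TTheory GRing.Theory Num.Theory.
Local Open Scope ring_scope.

(* Eigenvalues (with multiplicity) of a complex square matrix: the roots of its
   characteristic polynomial (which is monic, so lead_coef = 1). *)
Definition spectrum (n : nat) (A : 'M[algC]_n) : seq algC :=
  sval (closed_field_poly_normal (char_poly A)).

Definition energy (n : nat) (A : 'M[algC]_n) : algC :=
  \sum_(z <- spectrum A) `|z|.

Definition adj (n : nat) (e : rel 'I_n) : 'M[algC]_n :=
  \matrix_(i, j) (e i j)%:R.

Definition simple_graph (n : nat) (e : rel 'I_n) : Prop :=
  symmetric e /\ irreflexive e.

Definition regular (n : nat) (e : rel 'I_n) : Prop :=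
  exists k : nat, forall i : 'I_n, #|[set j | e i j]| = k.

Definition joined_union (e : rel 'I_2) (n1 n2 : nat)
  (e1 : rel 'I_n1) (e2 : rel 'I_n2) : 'M[algC]_(n1 + n2) :=
  block_mx (adj e1) (const_mx (e ord0 ord_max)%:R)
           (const_mx (e ord_max ord0)%:R) (adj e2).

(* Main.v *)
Require Import Defs.
From HB Require Import structures.
From mathcomp Require Import all_boot all_order all_algebra all_field.
From mathcomp Require Import ring lra zify.
Import Order.TTheory GRing.Theory Num.Theory.
Local Open Scope ring_scope.

Lemma spectrumE {n} (A : 'M[algC]_n) :
  char_poly A = \prod_(z <- spectrum A) ('X - z%:P).
Proof.
rewrite /spectrum; case: (closed_field_poly_normal _) => r /= ->.
by rewrite (monicP (char_poly_monic A)) scale1r.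
Qed.

Lemma energyE {n} (A : 'M[algC]_n) s :
  char_poly A = \prod_(z <- s) ('X - z%:P) -> energy A = \sum_(z <- s) `|z|.
Proof.
move=> h; rewrite /energy; apply: perm_big; apply: prod_XsubC_eq.
by rewrite -spectrumE.
Qed.

Lemma char_ublock m n (A : 'M[algC]_m) B (D : 'M_n) :
  char_poly (block_mx A B 0 D) = char_poly A * char_poly D.
Proof.
rewrite /char_poly /char_poly_mx map_block_mx /= map_mx0.
rewrite scalar_mx_block opp_block_mx add_block_mx oppr0 addr0.
by rewrite det_ublock.
Qed.

Lemma char_conj {m n} (e : m = n) (A : 'M[algC]_m) (S : 'M_(m, n)) (S' : 'M_(n, m)) :
  S' *m S = 1%:M -> char_poly (S' *m A *m S) = char_poly A.
Proof.
case: n / e S S' => S S' h.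
rewrite /char_poly /char_poly_mx !map_mxM.
have h' : map_mx polyC S' *m map_mx polyC S = 1%:M.
  by rewrite -map_mxM h map_mx1.
have e : map_mx polyC S' *m ('X%:M - map_mx polyC A) *m map_mx polyC S =
   'X%:M - map_mx polyC S' *m map_mx polyC A *m map_mx polyC S.
  by rewrite mulmxBr mulmxBl mul_mx_scalar -scalemxAl h' scalemx1.
rewrite -e !det_mulmx mulrC mulrA -det_mulmx.
have -> : map_mx polyC S *m map_mx polyC S' = 1%:M.
  exact: mulmx1C h'.
by rewrite det1 mul1r.
Qed.
Lemma det2 (R : comRingType) (A : 'M[R]_2) :
  \det A = A 0 0 * A 1 1 - A 0 1 * A 1 0.
Proof.
rewrite (expand_det_row _ 0) !big_ord_recl big_ord0 addr0 /cofactor !det_mx11 !mxE /=.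
rewrite expr0 expr1 mul1r mulN1r mulrN.
by congr (A _ _ * A _ _ - A _ _ * A _ _); apply: val_inj.
Qed.

Lemma tr2 (R : comRingType) (A : 'M[R]_2) : \tr A = A 0 0 + A 1 1.
Proof. rewrite /mxtrace !big_ord_recl big_ord0 addr0. by congr (A _ _ + A _ _); apply: val_inj. Qed.

Lemma spec2 (B : 'M[algC]_2) : exists l1 l2,
  char_poly B = ('X - l1%:P) * ('X - l2%:P) /\ l1 + l2 = B 0 0 + B 1 1
  /\ l1 * l2 = B 0 0 * B 1 1 - B 0 1 * B 1 0.
Proof.
have hs := spectrumE B.
have hsz : size (spectrum B) = 2%N.
  have := size_char_poly B; rewrite hs size_prod_XsubC; by case.
case: (spectrum B) hs hsz => [|l1 [|l2 [|]]] // hs _.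
rewrite !big_cons big_nil mulr1 in hs.
exists l1, l2; split => //.
have ht := char_poly_trace B (erefl true).
have hd := char_poly_det B.
rewrite hs /= in ht hd.
rewrite -tr2 -det2; split.
- apply: oppr_inj; rewrite -ht mulrBl coefB coefXM coefCM /= coefB coefX coefC /=.
  rewrite coefB coefX coefC /=; ring.
- have -> : \det B = (-1) ^+ 2 * \det B by ring.
  rewrite -hd mulrBl coefB coefXM coefCM /= coefB coefX coefC /=; ring.
Qed.
Lemma adj_reg n (e : rel 'I_n.+1) : irreflexive e -> regular e ->
  exists r : nat, (r < n.+1)%N /\
    adj e *m (const_mx 1 : 'cV_n.+1) = r%:R *: const_mx 1.
Proof.
move=> hirr [k hk]; exists k; split.
  have hc : #|[set~ (ord0 : 'I_n.+1)]| = n by rewrite cardsC1 card_ord.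
  rewrite -(hk ord0) ltnS -[X in (_ <= X)%N]hc.
  apply: subset_leq_card; apply/subsetP => j; rewrite !inE.
  by apply: contraTneq => ->; rewrite hirr.
apply/matrixP => i j; rewrite !mxE.
under eq_bigr do rewrite !mxE mulr1.
rewrite -natr_sum mulr1 -(hk i).
rewrite (_ : (\sum_j (e i j : nat))%N = \sum_(j | e i j) 1)%N; last first.
  by rewrite [RHS]big_mkcond; apply: eq_bigr => l _; case: (e i l).
by rewrite sum1_card; congr (_%:R); apply: eq_card => l; rewrite inE.
Qed.
Definition Pv k : 'cV[algC]_(1+k) := const_mx 1.
Definition Em k : 'M[algC]_(1+k, k) := col_mx 0 1%:M.
Definition Fv k : 'rV[algC]_(1+k) := row_mx 1%:M 0.
Definition Gm k : 'M[algC]_(k, 1+k) := row_mx (const_mx (-1)) 1%:M.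

Lemma mul_const1 m n (a : algC) (B : 'M[algC]_(1, n)) :
  (const_mx a : 'M_(m, 1)) *m B = \matrix_(i, j) (a * B 0 j).
Proof.
by apply/matrixP => i j; rewrite !mxE big_ord1 !mxE; congr (_ * B _ _); apply: ord1.
Qed.

Lemma FP k : Fv k *m Pv k = 1%:M.
Proof.
rewrite /Fv /Pv -col_mx_const mul_row_col mul0mx addr0 mul1mx.
by apply/matrixP => i j; rewrite (ord1 i) (ord1 j) !mxE.
Qed.

Lemma FE k : Fv k *m Em k = 0.
Proof. by rewrite /Fv /Em mul_row_col mul0mx mulmx0 addr0. Qed.

Lemma GP k : Gm k *m Pv k = 0.
Proof.
rewrite /Gm /Pv -col_mx_const mul_row_col mul1mx mul_const1.
by apply/matrixP => i j; rewrite !mxE mulr1 addNr.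
Qed.

Lemma GE k : Gm k *m Em k = 1%:M.
Proof. by rewrite /Gm /Em mul_row_col mulmx0 add0r mul1mx. Qed.

Lemma char_poly1 (B : 'M[algC]_1) : char_poly B = 'X - (B 0 0)%:P.
Proof. by rewrite /char_poly det_mx11 !mxE. Qed.

Lemma char_single k (A : 'M[algC]_(1+k)) (r : algC) :
  A *m Pv k = r *: Pv k ->
  char_poly A = ('X - r%:P) * char_poly (Gm k *m A *m Em k).
Proof.
move=> hA.
have hS : col_mx (Fv k) (Gm k) *m row_mx (Pv k) (Em k) = 1%:M.
  by rewrite mul_col_row FP FE GP GE -scalar_mx_block.
rewrite -(char_conj (erefl _) A _ _ hS).
rewrite mul_col_mx mul_col_row -!mulmxA hA -!scalemxAr FP GP scaler0 !mulmxA.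
by rewrite char_ublock char_poly1 !mxE eqxx mulr1.
Qed.
Lemma const_mulP m n (a : algC) :
  (const_mx a : 'M_(1+m, 1+n)) *m Pv n = (a * (1+n)%:R) *: Pv m.
Proof.
rewrite /Pv.
apply/matrixP => i j; rewrite !mxE.
under eq_bigr do rewrite !mxE mulr1.
by rewrite sumr_const card_ord mulr1 mulr_natr.
Qed.

Lemma G_const k n (a : algC) : Gm k *m (const_mx a : 'M_(1+k, n)) = 0.
Proof.
have -> : (const_mx a : 'M_(1+k, n)) = Pv k *m (const_mx a : 'M_(1, n)).
  by rewrite /Pv mul_const1; apply/matrixP => i j; rewrite !mxE mul1r.
by rewrite mulmxA GP mul0mx.
Qed.

Definition Sm k1 k2 : 'M[algC]_((1+k1)+(1+k2), (1+1)+(k1+k2)) :=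
  block_mx (row_mx (Pv k1) 0) (row_mx (Em k1) 0) (row_mx 0 (Pv k2)) (row_mx 0 (Em k2)).
Definition Sm' k1 k2 : 'M[algC]_((1+1)+(k1+k2), (1+k1)+(1+k2)) :=
  block_mx (col_mx (Fv k1) 0) (col_mx 0 (Fv k2)) (col_mx (Gm k1) 0) (col_mx 0 (Gm k2)).

Lemma SS k1 k2 : Sm' k1 k2 *m Sm k1 k2 = 1%:M.
Proof.
rewrite /Sm /Sm' mulmx_block !mul_col_row !FP !FE !GP !GE !mulmx0 !mul0mx.
by rewrite !add_block_mx !addr0 !add0r -!scalar_mx_block !block_mx0 -scalar_mx_block.
Qed.

Lemma char_joined k1 k2 (A1 : 'M[algC]_(1+k1)) (A2 : 'M[algC]_(1+k2)) r1 r2 (a b : algC) :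
  A1 *m Pv k1 = r1 *: Pv k1 -> A2 *m Pv k2 = r2 *: Pv k2 ->
  char_poly (block_mx A1 (const_mx a) (const_mx b) A2) =
  char_poly (block_mx r1%:M (a * (1+k2)%:R)%:M (b * (1+k1)%:R)%:M r2%:M : 'M_(1+1))
   * (char_poly (Gm k1 *m A1 *m Em k1) * char_poly (Gm k2 *m A2 *m Em k2)).
Proof.
move=> h1 h2.
have e : ((1+k1)+(1+k2) = (1+1)+(k1+k2))%N by rewrite addnACA.
rewrite -(char_conj e _ _ _ (SS k1 k2)).
rewrite /Sm /Sm' !mulmx_block !mul_col_mx !mul0mx !add_col_mx !addr0 !add0r !mul_col_row !mulmx0 -!mulmxA h1 h2 !const_mulP -!scalemxAr !FP !GP !scaler0 !mulmxA !G_const !mul0mx !add_block_mx !addr0 !add0r block_mx0 char_ublock !scalemx1 char_ublock. done.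
Qed.
Lemma ineq (r1 r2 n1 n2 : nat) (a b : bool) (l1 l2 m1 m2 : algC) :
  (r1 < n1)%N -> (r2 < n2)%N ->
  l1 + l2 = r1%:R + r2%:R ->
  l1 * l2 = r1%:R * r2%:R - (a%:R * n2%:R) * (b%:R * n1%:R) ->
  m1 + m2 = 0 -> m1 * m2 = 0 * 0 - a%:R * b%:R ->
  `|m1| + `|m2| + r1%:R + r2%:R <= `|l1| + `|l2|.
Proof.
move=> hr1 hr2 hs hp hms hmp.
have hm2 : m2 = - m1 by apply/eqP; rewrite -subr_eq0 opprK addrC hms.
rewrite hm2 normrN in hmp *.
have hsq : m1 ^+ 2 = a%:R * b%:R by rewrite -[LHS]opprK expr2 -mulrN hmp; ring.
clear hmp hms hm2; case: a b hp hsq => [] [] hp hsq; rewrite /= ?mul1r ?mul0r ?mulr0 in hp hsq.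
-
  have hm1 : `|m1| = 1.
    have : `|m1| ^+ 2 = 1 by rewrite -normrX hsq normr1.
    move/eqP; rewrite sqrf_eq1 => /orP [/eqP //|/eqP h].
    by have := normr_ge0 m1; rewrite h ler0N1.
  rewrite hm1.
  apply: le_trans (ler_normB l1 l2).
  have hN : (4 * r1 * r2 <= (r1 + r2) ^ 2 + 4 * n1 * n2)%N by nia.
  have hd : (l1 - l2) ^+ 2 = ((r1 + r2) ^ 2 + 4 * n1 * n2 - 4 * r1 * r2)%N%:R.
    rewrite natrB // !natrD !natrM natrD.
    have -> : (l1 - l2) ^+ 2 = (l1 + l2) ^+ 2 - 4%:R * (l1 * l2) by ring.
    rewrite hs hp; ring.
  have -> : 1 + 1 + r1%:R + r2%:R = (r1 + r2 + 2)%N%:R :> algC.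
    by rewrite !natrD; ring.
  rewrite -(ler_pXn2r (n := 2)) // ?nnegrE ?normr_ge0 ?ler0n //.
  rewrite -normrX hd normr_nat -natrX ler_nat; nia.
- have -> : `|m1| = 0 by apply/eqP; rewrite normr_eq0 -sqrf_eq0 hsq.
  rewrite !add0r.
  by apply: le_trans (ler_normD l1 l2); rewrite hs -natrD normr_nat.
- have -> : `|m1| = 0 by apply/eqP; rewrite normr_eq0 -sqrf_eq0 hsq.
  rewrite !add0r.
  by apply: le_trans (ler_normD l1 l2); rewrite hs -natrD normr_nat.
- have -> : `|m1| = 0 by apply/eqP; rewrite normr_eq0 -sqrf_eq0 hsq.
  rewrite !add0r.
  by apply: le_trans (ler_normD l1 l2); rewrite hs -natrD normr_nat.
Qed.

Theorem mainTheorem11 (n1 n2 : nat) (hn1 : (0 < n1)%N) (hn2 : (0 < n2)%N)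
  (e1 : rel 'I_n1) (e2 : rel 'I_n2) (e : rel 'I_2)
  (hs1 : simple_graph e1) (hr1 : regular e1)
  (hs2 : simple_graph e2) (hr2 : regular e2)
  (he : irreflexive e) :
  energy (adj e) + energy (adj e1) + energy (adj e2)
    <= energy (joined_union e e1 e2).
Proof.
case: n1 hn1 e1 hs1 hr1 => // k1 _ e1 hs1 hr1.
case: n2 hn2 e2 hs2 hr2 => // k2 _ e2 hs2 hr2.
have [r1 [hr1n h1]] := @adj_reg _ _ hs1.2 hr1.
have [r2 [hr2n h2]] := @adj_reg _ _ hs2.2 hr2.
have h1' : (adj e1 : 'M_(1+k1)) *m Pv k1 = r1%:R *: Pv k1 := h1.
have h2' : (adj e2 : 'M_(1+k2)) *m Pv k2 = r2%:R *: Pv k2 := h2.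
set a := e ord0 ord_max; set b := e ord_max ord0.
set R1 := Gm k1 *m (adj e1 : 'M_(1+k1)) *m Em k1.
set R2 := Gm k2 *m (adj e2 : 'M_(1+k2)) *m Em k2.
set Q := (block_mx (r1%:R)%:M (a%:R * (1+k2)%:R)%:M (b%:R * (1+k1)%:R)%:M (r2%:R)%:M
   : 'M[algC]_(1+1)).
have [l1 [l2 [hQ [hQs hQp]]]] := spec2 Q.
have [m1 [m2 [hG [hGs hGp]]]] := spec2 (adj e).
have EJ : energy (joined_union e e1 e2) =
    `|l1| + `|l2| + (\sum_(z <- spectrum R1) `|z| + \sum_(z <- spectrum R2) `|z|).
  rewrite (@energyE _ _ ([:: l1, l2 & spectrum R1 ++ spectrum R2])).
    by rewrite !big_cons big_cat !addrA.
  rewrite /joined_union (@char_joined _ _ _ _ _ _ _ _ h1' h2') -/R1 -/R2 -/Q hQ !spectrumE.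
  by rewrite !big_cons big_cat !mulrA.
have E1 : energy (adj e1) = r1%:R + \sum_(z <- spectrum R1) `|z|.
  rewrite (@energyE _ _ (r1%:R :: spectrum R1)); first by rewrite big_cons normr_nat.
  by rewrite (@char_single _ _ _ h1') -/R1 spectrumE big_cons.
have E2 : energy (adj e2) = r2%:R + \sum_(z <- spectrum R2) `|z|.
  rewrite (@energyE _ _ (r2%:R :: spectrum R2)); first by rewrite big_cons normr_nat.
  by rewrite (@char_single _ _ _ h2') -/R2 spectrumE big_cons.
have EG : energy (adj e) = `|m1| + `|m2|.
  rewrite (@energyE _ _ ([:: m1; m2])); first by rewrite !big_cons big_nil addr0.
  by rewrite hG !big_cons big_nil mulr1.
rewrite EJ E1 E2 EG.
have l0 : (0 : 'I_(1+1)) = lshift 1 (0 : 'I_1) by apply: val_inj.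
have r0 : (1 : 'I_(1+1)) = rshift 1 (0 : 'I_1) by apply: val_inj.
have q00 : Q 0 0 = r1%:R.
  rewrite l0 /Q; rewrite (@block_mxEul _ 1 1 1 1) mxE; exact: mulr1n.
have q11 : Q 1 1 = r2%:R.
  rewrite r0 /Q; rewrite (@block_mxEdr _ 1 1 1 1) mxE; exact: mulr1n.
have q01 : Q 0 1 = a%:R * (1+k2)%:R.
  rewrite l0 r0 /Q; rewrite (@block_mxEur _ 1 1 1 1) mxE; exact: mulr1n.
have q10 : Q 1 0 = b%:R * (1+k1)%:R.
  rewrite l0 r0 /Q; rewrite (@block_mxEdl _ 1 1 1 1) mxE; exact: mulr1n.
rewrite q00 q11 q01 q10 in hQs hQp.
have o0 : (0 : 'I_2) = ord0 by apply: val_inj.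
have o1 : (1 : 'I_2) = ord_max by apply: val_inj.
rewrite /adj !mxE o0 o1 !he -/a -/b /= add0r in hGs hGp.
have := @ineq _ _ _ _ _ _ _ _ _ _ hr1n hr2n hQs hQp hGs hGp.
move=> H.
set s1 := \sum_(z <- spectrum R1) `|z|.
set s2 := \sum_(z <- spectrum R2) `|z|.
have -> : `|m1| + `|m2| + (r1%:R + s1) + (r2%:R + s2) =
   (`|m1| + `|m2| + r1%:R + r2%:R) + (s1 + s2) by ring.
by rewrite lerD2r.
Qed.
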